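(* Let $n$ and $k$ be positive integers. Then the posets $\widetilde{\mathrm{NC}}^{(2k)}(2n+1)$ and $\mathrm{NC}^{(2k)}(n;k)$ (defined in the context) are isomorphic.
   Context: For a positive integer $N$, a partition $\pi$ of $[N]=\{1,\dots,N\}$ is noncrossing if there are no $a<b<c<d$ with $a,c$ in one block and $b,d$ in a different block. All posets of partitions are ordered by refinement ($\pi\le\sigma$ if every block of $\sigma$ is a union of blocks of $\pi$). Let $m=k(2n+1)$ and let $\rho$ be the $180^\circ$ rotation of $[2m]$ arranged on a circle: $\rho(i)=i+m$ for $1\le i\le m$, $\rho(i)=i-m$ for $m<i\le 2m$. $\widetilde{\mathrm{NC}}^{(2k)}(2n+1)$ is the poset of noncrossing partitions of $[2k(2n+1)]$ all of whose block sizes are divisible by $2k$ and which are invariant under $\rho$ (i.e. $\rho(B)$ is a block whenever $B$ is). For integers $K,r$ with $0<r<K$, $\mathrm{NC}^{(K)}(n;r)$ is the poset of noncrossing partitions of $[Kn+r]$ in which the sizes of all but one of the blocks are divisible by $K$; here $K=2k$, $r=k$. *)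

(* Defs.v *)
(* Ground set [N] = {1..N} is modelled by 'I_N = {0..N-1}
   (shift by one; order-preserving, so noncrossingness is unaffected). *)
From mathcomp Require Import all_boot all_order.
Set Implicit Arguments. Unset Strict Implicit. Unset Printing Implicit Defensive.

Definition set_partition (N : nat) (P : {set {set 'I_N}}) : Prop :=
  partition P [set: 'I_N].

Definition noncrossing (N : nat) (P : {set {set 'I_N}}) : Prop :=
  forall (B C : {set 'I_N}) (a b c d : 'I_N),
    B \in P -> C \in P -> B != C ->
    a \in B -> c \in B -> b \in C -> d \in C ->
    ~ ((a < b)%N /\ (b < c)%N /\ (c < d)%N).

Definition refines (N : nat) (P Q : {set {set 'I_N}}) : Prop :=
  forall B, B \in Q -> exists S : {set {set 'I_N}}, S \subset P /\ B = cover S.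

(* 180-degree rotation of [2m] (0-indexed): i |-> i+m if i<m, i-m otherwise. *)
Definition rho_nat (m i : nat) : nat := if (i < m)%N then (i + m)%N else (i - m)%N.

Definition rho_invariant (m : nat) (P : {set {set 'I_(2 * m)}}) : Prop :=
  forall B, B \in P -> exists B', B' \in P /\
    forall x : 'I_(2 * m), x \in B' <-> exists y, y \in B /\ val x = rho_nat m (val y).

Definition NCtilde (k n : nat) (P : {set {set 'I_(2 * (k * (2 * n + 1)))}}) : Prop :=
  [/\ set_partition P, noncrossing P,
      (forall B, B \in P -> (2 * k %| #|B|)%N)
    & rho_invariant P].

Definition NCr (K n r : nat) (P : {set {set 'I_(K * n + r)}}) : Prop :=
  [/\ set_partition P, noncrossing P
    & exists B0, B0 \in P /\ forall B, B \in P -> B != B0 -> (K %| #|B|)%N].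

Definition poset_iso (N M : nat) (Pa : {set {set 'I_N}} -> Prop)
    (Pb : {set {set 'I_M}} -> Prop) : Prop :=
  exists f : {set {set 'I_N}} -> {set {set 'I_M}},
    [/\ (forall P, Pa P -> Pb (f P)),
        (forall P Q, Pa P -> Pa Q -> f P = f Q -> P = Q),
        (forall Q, Pb Q -> exists P, Pa P /\ f P = Q)
      & (forall P Q, Pa P -> Pa Q -> (refines P Q <-> refines (f P) (f Q)))].

(* Main.v *)
Require Import Defs.
From mathcomp Require Import all_boot all_order zify.
Set Implicit Arguments. Unset Strict Implicit. Unset Printing Implicit Defensive.

Definition RP N (P : {set {set 'I_N}}) (a b : nat) : bool :=
  [exists x : 'I_N, [exists y : 'I_N, [&& val x == a, val y == b & y \in pblock P x]]].

Lemma RPP N (P : {set {set 'I_N}}) a b : RP P a b ->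
  exists x y : 'I_N, [/\ val x = a, val y = b & y \in pblock P x].
Proof. by move=> /existsP[x /existsP[y /and3P[/eqP e1 /eqP e2 H]]]; exists x, y. Qed.

Lemma RP_ord N (P : {set {set 'I_N}}) (x y : 'I_N) : RP P x y = (y \in pblock P x).
Proof.
apply/idP/idP => [/RPP[x' [y' [e1 e2 H]]]|H].
  by rewrite -(val_inj e1) -(val_inj e2).
by apply/existsP; exists x; apply/existsP; exists y; rewrite !eqxx.
Qed.

Lemma RP_lt N (P : {set {set 'I_N}}) a b : RP P a b -> (a < N) && (b < N).
Proof. by move/RPP=> [x [y [<- <- _]]]; rewrite !ltn_ord. Qed.

Definition EqR (N : nat) (S : nat -> nat -> bool) :=
 [/\ (forall a, a < N -> S a a), (forall a b, S a b -> S b a),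
     (forall a b c, S a b -> S b c -> S a c) & (forall a b, S a b -> (a < N) && (b < N))].

Lemma pe N (P : {set {set 'I_N}}) : partition P setT -> forall x y z : 'I_N,
  (x \in pblock P x) * (y \in pblock P x -> (z \in pblock P y) = (z \in pblock P x)).
Proof.
move=> pP x y z; have := pblock_equivalence pP.
move=> /(_ x y z (in_setT _) (in_setT _) (in_setT _)) [H1 H2].
have := pblock_equivalence pP; move=> /(_ x x x (in_setT _) (in_setT _) (in_setT _)) [H3 _].
by split => // /H2.
Qed.

Lemma RP_EqR N (P : {set {set 'I_N}}) : partition P setT -> EqR N (RP P).
Proof.
move=> pP; split.
- move=> a lt; have x0 := Ordinal lt; change (RP P (Ordinal lt) (Ordinal lt)); rewrite RP_ord; exact: (pe pP _ x0 x0).1.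
- move=> a b /RPP[x [y [<- <- H]]]; rewrite RP_ord.
  by have [h1 /(_ H) ->] := pe pP x y x.
- move=> a b c /RPP[x [y [<- <- H]]] /RPP[y' [z [e <- H']]].
  rewrite (val_inj e) in H'; rewrite RP_ord.
  by have [_ /(_ H) <-] := pe pP x y z.
- exact: RP_lt.
Qed.

Definition mkP N (S : nat -> nat -> bool) : {set {set 'I_N}} :=
  equivalence_partition (fun x y : 'I_N => S x y) setT.

Lemma EqR_eqrel N S : EqR N S -> {in [set: 'I_N] & &, equivalence_rel (fun x y : 'I_N => S x y)}.
Proof.
case=> r s t _ x y z _ _ _; split; first exact: r.
by move=> Hxy; apply/idP/idP => [H|H]; [apply: t (s _ _ Hxy) H | apply: t Hxy H].
Qed.

Lemma mkP_part N S : EqR N S -> partition (mkP N S) setT.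
Proof. by move=> e; apply: equivalence_partitionP; apply: EqR_eqrel. Qed.

Lemma RP_mkP N S : EqR N S -> forall a b, RP (mkP N S) a b = S a b.
Proof.
move=> e a b; apply/idP/idP => [/RPP[x [y [<- <- H]]]|H].
  by rewrite pblock_equivalence_partition ?inE // in H; apply: EqR_eqrel.
have [_ _ _ d] := e; have /andP[la lb] := d _ _ H.
change (RP (mkP N S) (Ordinal la) (Ordinal lb)).
by rewrite RP_ord pblock_equivalence_partition ?inE //; apply: EqR_eqrel.
Qed.

Lemma pblock_mkP N S (x : 'I_N) : EqR N S -> pblock (mkP N S) x = [set y : 'I_N | S x y].
Proof. by move=> e; apply/setP => y; rewrite inE -RP_ord RP_mkP. Qed.

Definition NCn (N : nat) (R : nat -> nat -> bool) := forall a b c d : nat,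
  a < b -> b < c -> c < d -> d < N -> R a c -> R b d -> R a b.

Lemma blockP N (P : {set {set 'I_N}}) B : partition P setT -> B \in P ->
  exists x, B = pblock P x /\ x \in B.
Proof.
move=> pP BP; have /set0Pn[x xB] := partition_neq0 pP BP.
by exists x; rewrite (def_pblock (partition_trivIset pP) BP xB).
Qed.

Lemma pblockP N (P : {set {set 'I_N}}) x : partition P setT -> pblock P x \in P.
Proof. by move=> pP; apply: pblock_mem; rewrite (cover_partition pP). Qed.

Lemma nc_to N (P : {set {set 'I_N}}) : partition P setT -> noncrossing P -> NCn N (RP P).
Proof.
move=> pP nc a b c d ab bc cd dN Hac Hbd.
have aN : a < N by lia. have bN : b < N by lia. have cN : c < N by lia.
have Hac' : RP P (Ordinal aN) (Ordinal cN) := Hac.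
have Hbd' : RP P (Ordinal bN) (Ordinal dN) := Hbd.
change (RP P (Ordinal aN) (Ordinal bN)).
clear Hac Hbd; move: Hac' Hbd'; rewrite !RP_ord => Hac Hbd; apply/negPn/negP => nab.
apply: (nc (pblock P (Ordinal aN)) (pblock P (Ordinal bN)) (Ordinal aN) (Ordinal bN) (Ordinal cN) (Ordinal dN)) => //.
- exact: pblockP.
- exact: pblockP.
- by apply: contra nab => /eqP ->; exact: (pe pP _ (Ordinal aN) (Ordinal aN)).1.
- exact: (pe pP _ (Ordinal aN) (Ordinal aN)).1.
- exact: (pe pP _ (Ordinal bN) (Ordinal bN)).1.
Qed.

Lemma nc_from N (P : {set {set 'I_N}}) : partition P setT -> NCn N (RP P) -> noncrossing P.
Proof.
move=> pP nc B C a b c d BP CP BC aB cB bC dC [ab [bc cd]].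
have tP := partition_trivIset pP.
have eB := def_pblock tP BP; have eC := def_pblock tP CP.
have : RP P a b.
  apply: (nc a b c d ab bc cd (ltn_ord d)).
  by rewrite RP_ord eB.
  by rewrite RP_ord eC.
rewrite RP_ord eB // => bB; move/negP: BC; apply; apply/eqP.
by rewrite -(eB _ bB) (eC _ bC).
Qed.

Lemma ref_to N (P Q : {set {set 'I_N}}) : partition P setT -> partition Q setT ->
  refines P Q -> forall a b, RP P a b -> RP Q a b.
Proof.
move=> pP pQ ref a b /RPP[x [y [<- <- H]]].
have [S [SP eB]] := ref _ (pblockP x pQ).
have : x \in cover S by rewrite -eB mem_pblock (cover_partition pQ).
case/bigcupP => A AS xA.
have AP : A \in P by apply: (subsetP SP).
rewrite (def_pblock (partition_trivIset pP) AP xA) in H.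
by rewrite RP_ord eB; apply/bigcupP; exists A.
Qed.

Lemma ref_from N (P Q : {set {set 'I_N}}) : partition P setT -> partition Q setT ->
  (forall a b, RP P a b -> RP Q a b) -> refines P Q.
Proof.
move=> pP pQ H B BQ; exists [set A in P | A \subset B]; split.
  by apply/subsetP => A; rewrite inE => /andP[].
apply/setP => y; apply/idP/idP => [yB|/bigcupP[A]]; last first.
  by rewrite inE => /andP[_ /subsetP]; apply.
apply/bigcupP; exists (pblock P y); last by rewrite mem_pblock (cover_partition pP).
rewrite inE pblockP //=; apply/subsetP => z zA.
have := H y z; rewrite !RP_ord => /(_ zA).
by rewrite (def_pblock (partition_trivIset pQ) BQ yB).
Qed.

Lemma part_eq N (P Q : {set {set 'I_N}}) : partition P setT -> partition Q setT ->
  (forall a b, RP P a b = RP Q a b) -> P = Q.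
Proof.
move=> pP pQ H.
rewrite -(equivalence_partition_pblock pP) -(equivalence_partition_pblock pQ).
rewrite /equivalence_partition; apply: eq_imset => x; apply/setP => y.
by rewrite !inE -!RP_ord H.
Qed.

Lemma block_union N (P : {set {set 'I_N}}) (U : {set 'I_N}) : partition P setT ->
  (forall x y : 'I_N, x \in U -> y \in pblock P x -> y \in U) ->
  #|U| = \sum_(B in [set B in P | B \subset U]) #|B|.
Proof.
move=> pP cl; apply: card_partition; apply/and3P; split.
- rewrite eqEsubset; apply/andP; split.
    by apply/bigcupsP => B; rewrite inE => /andP[].
  apply/subsetP => x xU; apply/bigcupP; exists (pblock P x).
    rewrite inE pblockP //=; apply/subsetP => y; exact: cl.
  by rewrite mem_pblock (cover_partition pP).
- apply: trivIsetS (partition_trivIset pP).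
  by apply/subsetP => B; rewrite inE => /andP[].
- by rewrite inE negb_and (partition0 pP).
Qed.

Lemma rho_lt m x : x < 2 * m -> rho_nat m x < 2 * m.
Proof. rewrite /rho_nat; case: ifP => h; lia. Qed.

Lemma rhoK m x : x < 2 * m -> rho_nat m (rho_nat m x) = x.
Proof.
move=> lt; rewrite /rho_nat; case: (ltnP x m) => h1.
  have -> : (x + m < m) = false by lia.
  lia.
have -> : (x - m < m) = true by lia.
lia.
Qed.

Definition rho_ord m (x : 'I_(2 * m)) : 'I_(2 * m) := Ordinal (rho_lt (ltn_ord x)).

Lemma rinv_to m (P : {set {set 'I_(2 * m)}}) : partition P setT -> rho_invariant P ->
  forall a b, RP P a b -> RP P (rho_nat m a) (rho_nat m b).
Proof.
move=> pP ri a b /RPP[x [y [<- <- H]]].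
have [B' [B'P HB']] := ri _ (pblockP x pP).
have rx : rho_ord x \in B' by apply/HB'; exists x; rewrite mem_pblock (cover_partition pP).
have ry : rho_ord y \in B' by apply/HB'; exists y.
change (RP P (rho_ord x) (rho_ord y)).
by rewrite RP_ord (def_pblock (partition_trivIset pP) B'P rx).
Qed.

Lemma rinv_from m (P : {set {set 'I_(2 * m)}}) : partition P setT ->
  (forall a b, RP P a b -> RP P (rho_nat m a) (rho_nat m b)) -> rho_invariant P.
Proof.
move=> pP H B BP; have [x [-> xB]] := blockP pP BP.
exists (pblock P (rho_ord x)); split; first exact: pblockP.
move=> x'; split => [Hx|[y [yB e]]].
  exists (rho_ord x'); split; last by rewrite /= rhoK.
  have Hx' : RP P (rho_ord x) x' by rewrite RP_ord.
  have := H _ _ Hx'.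
  rewrite /= rhoK ?ltn_ord // => h; have h' : RP P x (rho_ord x') := h.
  by rewrite RP_ord in h'.
have := H x y; rewrite RP_ord => /(_ yB).
have -> : x' = rho_ord y by apply: val_inj.
by rewrite -RP_ord.
Qed.

Definition cyc (A B C D : nat) : Prop :=
  ((A < B) /\ (B < C) /\ (C < D)) \/ ((B < C) /\ (C < D) /\ (D < A)) \/
  ((C < D) /\ (D < A) /\ (A < B)) \/ ((D < A) /\ (A < B) /\ (B < C)).

Lemma cycNC N R A B C D : NCn N R -> EqR N R -> A < N -> B < N -> C < N -> D < N ->
  cyc A B C D -> R A C -> R B D -> R A B.
Proof.
move=> nc [r s t _] aN bN cN dN [[h1 [h2 h3]]|[[h1 [h2 h3]]|[[h1 [h2 h3]]|[h1 [h2 h3]]]]] Hac Hbd.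
- exact: (nc A B C D).
- have := nc B C D A h1 h2 h3 aN Hbd (s _ _ Hac) => Hbc.
  exact: t _ _ _ Hac (s _ _ Hbc).
- have := nc C D A B h1 h2 h3 bN (s _ _ Hac) (s _ _ Hbd) => Hcd.
  exact: t _ _ _ (t _ _ _ Hac Hcd) (s _ _ Hbd).
- have := nc D A B C h1 h2 h3 cN (s _ _ Hbd) Hac => Hda.
  exact: t _ _ _ (s _ _ Hda) (s _ _ Hbd).
Qed.

Definition rotn (N r a : nat) := if a + r < N then a + r else a + r - N.

Definition rotR N r (R : nat -> nat -> bool) a b := [&& a < N, b < N & R (rotn N r a) (rotn N r b)].

Lemma rot_lt N r a : r <= N -> a < N -> rotn N r a < N.
Proof. by rewrite /rotn; case: ifP => h; lia. Qed.

Lemma rotR_EqR N r R : r <= N -> EqR N R -> EqR N (rotR N r R).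
Proof.
move=> rN [rf s t d]; split.
- by move=> a aN; rewrite /rotR aN rf // rot_lt.
- by move=> a b /and3P[h1 h2 h3]; rewrite /rotR h1 h2 s.
- move=> a b c /and3P[h1 h2 h3] /and3P[h4 h5 h6]; rewrite /rotR h1 h5.
  exact: t _ _ _ h3 h6.
- by move=> a b /and3P[-> -> _].
Qed.

Lemma rot_cyc N r a b c d : r <= N -> a < b -> b < c -> c < d -> d < N ->
  cyc (rotn N r a) (rotn N r b) (rotn N r c) (rotn N r d).
Proof.
rewrite /rotn /cyc => *.
case: ifP => ?; case: ifP => ?; case: ifP => ?; case: ifP => ?; lia.
Qed.

Lemma rotNC N r R : r <= N -> NCn N R -> EqR N R -> NCn N (rotR N r R).
Proof.
move=> rN nc e a b c d ab bc cd dN /and3P[_ _ Hac] /and3P[_ _ Hbd].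
have aN : a < N by lia. have bN : b < N by lia. have cN : c < N by lia.
rewrite /rotR aN bN /=.
apply: (cycNC nc e) Hac Hbd; rewrite ?rot_lt //.
exact: rot_cyc.
Qed.

Lemma NCn_ext N R R' : (forall a b, a < N -> b < N -> R a b = R' a b) -> NCn N R -> NCn N R'.
Proof.
move=> E nc a b c d ab bc cd dN.
rewrite -!E; try lia. exact: nc.
Qed.

Definition win (m z x : nat) := (z <= x) && (x < z + m).
Definition Lf (m z x : nat) := if win m z x then x else rho_nat m x.
Definition Trel (m : nat) (R : nat -> nat -> bool) i j := [&& i < m, j < m & R i j || R i (j + m)].

Lemma rho_lo m i : i < m -> rho_nat m i = i + m.
Proof. by move=> h; rewrite /rho_nat h. Qed.

Lemma rho_hi m i : rho_nat m (i + m) = i.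
Proof. by rewrite /rho_nat ltnNge leq_addl /= addnK. Qed.

Lemma rho_win m z x : z < m -> x < 2 * m -> win m z (rho_nat m x) = ~~ win m z x.
Proof. by rewrite /win /rho_nat => h1 h2; case: ifP => h3; apply/idP/idP; lia. Qed.

Lemma ri_inv m R (ri : forall a b, R a b -> R (rho_nat m a) (rho_nat m b)) a b :
  a < 2 * m -> b < 2 * m -> R (rho_nat m a) (rho_nat m b) -> R a b.
Proof. by move=> ha hb /ri; rewrite !rhoK. Qed.


Lemma zero_rho m R z x : EqR (2 * m) R -> (forall a b, R a b -> R (rho_nat m a) (rho_nat m b)) ->
  z < m -> R z (z + m) -> R x z -> R (rho_nat m x) z.
Proof.
move=> [r s t d] ri zm Hz Hx; have := ri _ _ Hx; rewrite (rho_lo zm) => H.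
exact: t _ _ _ H (s _ _ Hz).
Qed.

Lemma side_aux m R z x y : EqR (2 * m) R -> NCn (2 * m) R ->
  z < m -> R z (z + m) -> R x y -> ~~ R x z -> win m z x -> ~~ win m z y -> False.
Proof.
move=> [r s t d] nc zm Hz Hxy nxz wx nwy.
have /andP[xN yN] := d _ _ Hxy.
have xz : x != z by apply: contraNneq nxz => ->; apply: r; lia.
have yz : y != z by apply: contraNneq nxz => <-.
have yzm : y != z + m.
  by apply: contraNneq nxz => eyz; apply: t _ _ _ Hxy _; rewrite eyz; apply: s.
move: wx nwy; rewrite /win => /andP[h1 h2] h3.
case: (ltnP (z + m) y) => h4.
  have := nc z x (z + m) y ltac:(lia) ltac:(lia) h4 yN Hz Hxy.
  by move/s; rewrite (negbTE nxz).
have h5 : y < z by move: h3 yz yzm; rewrite negb_and -!ltnNge; lia.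
have := nc y z x (z + m) h5 ltac:(lia) ltac:(lia) ltac:(lia) (s _ _ Hxy) Hz.
by move=> Hyz; move: nxz; rewrite (t _ _ _ Hxy Hyz).
Qed.

Lemma side m R z x y : EqR (2 * m) R -> NCn (2 * m) R ->
  z < m -> R z (z + m) -> R x y -> ~~ R x z -> win m z x = win m z y.
Proof.
move=> e nc zm Hz Hxy nxz; have [r s t d] := e.
case Wx: (win m z x); case Wy: (win m z y) => //.
  by case: (side_aux e nc zm Hz Hxy nxz); rewrite ?Wx ?Wy.
have nyz : ~~ R y z by apply: contra nxz; apply: t _ _ _ Hxy.
by case: (side_aux e nc zm Hz (s _ _ Hxy) nyz); rewrite ?Wx ?Wy.
Qed.

Lemma Lf_cases m z x : Lf m z x = x \/ Lf m z x = rho_nat m x.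
Proof. by rewrite /Lf; case: ifP; [left|right]. Qed.

Lemma Lf_lt m z x : x < 2 * m -> Lf m z x < 2 * m.
Proof. by rewrite /Lf; case: ifP => // _; apply: rho_lt. Qed.

Lemma Lf_rho m z x : z < m -> x < 2 * m -> Lf m z (rho_nat m x) = Lf m z x.
Proof.
move=> zm xN; rewrite /Lf rho_win // rhoK //.
by case: (win m z x).
Qed.

Lemma Lf_rel m R z x y : EqR (2 * m) R -> NCn (2 * m) R ->
  (forall a b, R a b -> R (rho_nat m a) (rho_nat m b)) ->
  z < m -> R z (z + m) -> R x y -> R (Lf m z x) (Lf m z y).
Proof.
move=> e nc ri zm Hz Hxy; have [r s t d] := e.
have /andP[xN yN] := d _ _ Hxy.
case Hxz: (R x z).
  have Hyz : R y z by apply: t _ _ _ (s _ _ Hxy) Hxz.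
  have Z : forall w, R w z -> R (Lf m z w) z.
    by move=> w Hw; case: (Lf_cases m z w) => ->; last apply: zero_rho.
  exact: t _ _ _ (Z _ Hxz) (s _ _ (Z _ Hyz)).
have := side e nc zm Hz Hxy (negbT Hxz).
rewrite /Lf => ->; case: ifP => _ //.
exact: ri.
Qed.

Lemma T_L m R z i j : EqR (2 * m) R -> NCn (2 * m) R ->
  (forall a b, R a b -> R (rho_nat m a) (rho_nat m b)) ->
  z < m -> R z (z + m) -> i < m -> j < m ->
  Trel m R i j = R (Lf m z i) (Lf m z j).
Proof.
move=> e nc ri zm Hz im jm; have [r s t d] := e.
have iN : i < 2 * m by lia. have jN : j < 2 * m by lia.
rewrite /Trel im jm /=; apply/idP/idP.
  case/orP => H; first exact: Lf_rel.
  by have := Lf_rel e nc ri zm Hz H; rewrite -(rho_lo jm) Lf_rho.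
case: (Lf_cases m z i) => ->; case: (Lf_cases m z j) => -> H.
- by rewrite H.
- by rewrite -(rho_lo jm) H orbT.
- have := ri _ _ H; rewrite rhoK // rho_lo // => ->; by rewrite orbT.
- by rewrite (ri_inv ri iN jN H).
Qed.

Lemma T_EqR m R : EqR (2 * m) R -> (forall a b, R a b -> R (rho_nat m a) (rho_nat m b)) ->
  EqR m (Trel m R).
Proof.
move=> [r s t d] ri; split.
- by move=> a am; rewrite /Trel am r //; lia.
- move=> a b /and3P[am bm /orP[H|H]]; rewrite /Trel am bm /=.
    by rewrite s.
  have := ri _ _ (s _ _ H); rewrite rho_hi rho_lo // => ->; by rewrite orbT.
- move=> a b c /and3P[am bm H1] /and3P[_ cm H2]; rewrite /Trel am cm /=.
  case/orP: H1 => H1; case/orP: H2 => H2.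
  + by rewrite (t _ _ _ H1 H2).
  + by rewrite (t _ _ _ H1 H2) orbT.
  + have := ri _ _ H2; rewrite !rho_lo // => H3. by rewrite (t _ _ _ H1 H3) orbT.
  + have := ri _ _ H2; rewrite rho_lo // rho_hi => H3. by rewrite (t _ _ _ H1 H3).
- by move=> a b /and3P[-> -> _].
Qed.

Lemma Lf_lo m z i : i < m -> Lf m z i = if z <= i then i else i + m.
Proof.
move=> im; rewrite /Lf /win; case: (leqP z i) => h /=.
  by rewrite ifT //; lia.
by rewrite rho_lo.
Qed.

Lemma T_NC m R z : EqR (2 * m) R -> NCn (2 * m) R ->
  (forall a b, R a b -> R (rho_nat m a) (rho_nat m b)) ->
  z < m -> R z (z + m) -> NCn m (Trel m R).
Proof.
move=> e nc ri zm Hz a b c d ab bc cd dm.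
rewrite !(T_L e nc ri zm Hz); try lia.
apply: (cycNC nc e); rewrite ?Lf_lt //; try lia.
rewrite !Lf_lo; try lia.
rewrite /cyc; case: ifP => ?; case: ifP => ?; case: ifP => ?; case: ifP => ?; lia.
Qed.

Definition pm (m x : nat) := if x < m then x else x - m.
Ltac crush0 := repeat (match goal with
  | |- context [if ?b then _ else _] => let H := fresh "H" in destruct b eqn:H
  | H : context [if ?b then _ else _] |- _ => let H' := fresh "H" in destruct b eqn:H'
  end); try lia.
Ltac crush := rewrite ?/rotn ?/pm ?/win ?/rho_nat; crush0.


Definition gR (m : nat) (S : nat -> nat -> bool) (c x y : nat) :=
  [&& x < 2 * m, y < 2 * m, S (pm m x) (pm m y) & S (pm m x) c || (win m c x == win m c y)].

Lemma pm_lt m x : x < 2 * m -> pm m x < m.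
Proof. by move=> *; crush. Qed.

Lemma pm_rho m x : x < 2 * m -> pm m (rho_nat m x) = pm m x.
Proof. by move=> *; crush. Qed.

Lemma gR_EqR m S c : EqR m S -> c < m -> EqR (2 * m) (gR m S c).
Proof.
move=> [r s t d] cm; split.
- by move=> a aN; rewrite /gR aN r ?eqxx ?orbT //; apply: pm_lt.
- move=> a b /and4P[h1 h2 h3 h4]; rewrite /gR h1 h2 s //=.
  case/orP: h4 => [h4|/eqP->]; last by rewrite eqxx orbT.
  by rewrite (t _ _ _ (s _ _ h3) h4).
- move=> a b c' /and4P[h1 h2 h3 h4] /and4P[_ h6 h7 h8]; rewrite /gR h1 h6 (t _ _ _ h3 h7) /=.
  case/orP: h4 => [->//|/eqP->].
  case/orP: h8 => [h8|->]; last by rewrite orbT.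
  by rewrite (t _ _ _ h3 h8).
- by move=> a b /and4P[-> -> _ _].
Qed.

Lemma gR_rho m S c x y : c < m -> gR m S c x y -> gR m S c (rho_nat m x) (rho_nat m y).
Proof.
move=> cm /and4P[h1 h2 h3 h4]; rewrite /gR !rho_lt // !pm_rho // h3 !rho_win //.
by case/orP: h4 => [->//|/eqP->]; rewrite eqxx orbT.
Qed.

Definition Krel (m : nat) (S : nat -> nat -> bool) (x y : nat) :=
  [&& x < 2 * m, y < 2 * m, S (pm m x) (pm m y) & S (pm m x) 0 || ((x < m) == (y < m))].

Lemma K_NC m S : EqR m S -> NCn m S -> NCn (2 * m) (Krel m S).
Proof.
move=> [r s t dd] nc a b c d ab bc cd dN /and4P[_ _ Hac Kac] /and4P[_ _ Hbd Kbd].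
have aN : a < 2 * m by lia. have bN : b < 2 * m by lia.
rewrite /Krel aN bN /=.
case: (ltnP d m) => dm.
  have am : a < m by lia. have bm : b < m by lia. have cm : c < m by lia.
  move: Hac Hbd; rewrite /pm am bm cm dm => Hac Hbd.
  by rewrite (nc a b c d) // eqxx orbT.
case: (ltnP c m) => cm.
  have am : a < m by lia. have bm : b < m by lia.
  have dF : (d < m) = false by lia.
  move: Hac Hbd Kbd; rewrite /pm am bm cm dF /= => Hac Hbd.
  rewrite orbF => Hb0.
  rewrite eqxx orbT andbT.
  case: (posnP a) => a0.
    by move: Hb0; rewrite a0 => /s.
  have := nc 0 a b c a0 ab bc ltac:(lia) (s _ _ Hb0) Hac => H0a.
  exact: t _ _ _ (s _ _ H0a) (s _ _ Hb0).
have cF : (c < m) = false by lia. have dF : (d < m) = false by lia.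
case: (ltnP b m) => bm.
  have am : a < m by lia.
  move: Hac Hbd Kac Kbd; rewrite /pm am bm cF dF /= !orbF => _ _ Ha0 Hb0.
  by rewrite (t _ _ _ Ha0 (s _ _ Hb0)) eqxx orbT.
have bF : (b < m) = false by lia.
case: (ltnP a m) => am.
  move: Hac Hbd Kac Kbd; rewrite /pm am bF cF dF /= !orbF => Hac Hbd Ha0 _.
  have Hc0 : S (c - m) 0 by apply: t _ _ _ (s _ _ Hac) Ha0.
  case: (posnP (b - m)) => b0.
    by rewrite b0 Ha0.
  have := nc 0 (b - m) (c - m) (d - m) b0 ltac:(lia) ltac:(lia) ltac:(lia) (s _ _ Hc0) Hbd => H0b.
  by rewrite (t _ _ _ Ha0 H0b) Ha0.
have aF : (a < m) = false by lia.
move: Hac Hbd; rewrite /pm aF bF cF dF /= => Hac Hbd.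
rewrite (nc (a - m) (b - m) (c - m) (d - m)) //; try lia.
Qed.

Lemma rot_pm m c x : c < m -> x < 2 * m -> rotn m c (pm m (rotn (2 * m) (2 * m - c) x)) = pm m x.
Proof. by move=> *; crush. Qed.

Lemma rot0 m c : c < m -> rotn m c 0 = c.
Proof. by move=> *; crush. Qed.

Lemma rot_win m c x : c < m -> x < 2 * m -> (rotn (2 * m) (2 * m - c) x < m) = win m c x.
Proof. by move=> *; crush; apply/idP/idP; crush. Qed.

Lemma Krel_gR m S x y : Krel m S x y = gR m S 0 x y.
Proof. by rewrite /Krel /gR /win. Qed.

Lemma gR_K m S c x y : c < m -> x < 2 * m -> y < 2 * m ->
  gR m S c x y = rotR (2 * m) (2 * m - c) (Krel m (rotR m c S)) x y.
Proof.
move=> cm xN yN.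
rewrite /rotR /Krel xN yN !rot_lt ?leq_subr // !pm_lt ?rot_lt ?leq_subr //.
  rewrite !rot_pm // rot0 // !rot_win // /gR xN yN.
  by have -> : 0 < m by lia.
all: lia.
Qed.

Lemma gR_NC m S c : EqR m S -> NCn m S -> c < m -> NCn (2 * m) (gR m S c).
Proof.
move=> e nc cm.
apply: (@NCn_ext _ (rotR (2 * m) (2 * m - c) (Krel m (rotR m c S)))).
  by move=> a b aN bN; rewrite gR_K.
have e' := rotR_EqR (ltnW cm) e.
apply: rotNC; first exact: leq_subr.
  apply: K_NC => //; exact: rotNC (ltnW cm) nc e.
have := gR_EqR e' (leq_ltn_trans (leq0n c) cm).
by case=> r s t d; split => *; rewrite ?Krel_gR; [apply: r | apply: s | apply: t | apply: d];
  rewrite -?Krel_gR; eauto.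
Qed.

Definition Ptil (k m : nat) (P : {set {set 'I_(2 * m)}}) : Prop :=
  [/\ set_partition P, noncrossing P,
      (forall B, B \in P -> (2 * k %| #|B|)%N)
    & rho_invariant P].

Definition Pr (k m : nat) (P : {set {set 'I_m}}) : Prop :=
  [/\ set_partition P, noncrossing P
    & exists B0, B0 \in P /\ forall B, B \in P -> B != B0 -> (2 * k %| #|B|)%N].

Arguments Ptil : clear implicits.
Arguments Pr : clear implicits.

Lemma notdiv k n : 0 < k -> ~~ (2 * k %| 2 * k * n + k).
Proof.
move=> k0; rewrite (dvdn_addr k (dvdn_mulr n (dvdnn (2 * k)))); apply/negP => h; have := dvdn_leq k0 h; lia.
Qed.

Lemma rho_ordK m (x : 'I_(2 * m)) : rho_ord (rho_ord x) = x.
Proof. by apply: val_inj; rewrite /= rhoK. Qed.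

Lemma union_dvd N d (P : {set {set 'I_N}}) (U : {set 'I_N}) : partition P setT ->
  (forall B, B \in P -> d %| #|B|) ->
  (forall x y : 'I_N, x \in U -> y \in pblock P x -> y \in U) -> d %| #|U|.
Proof.
move=> pP dv cl; rewrite (block_union pP cl); apply: dvdn_sum => B.
by rewrite inE => /andP[/dv].
Qed.

Lemma zero_exists k m n (P : {set {set 'I_(2 * m)}}) : 0 < k -> m = 2 * k * n + k -> Ptil k m P ->
  exists z, z < m /\ RP P z (z + m).
Proof.
move=> k0 em [pP ncP dv rinv].
have e := RP_EqR pP; have [r s t d] := e.
have ri := rinv_to pP rinv.
case: (boolP [exists i : 'I_m, RP P i (i + m)]) => [/existsP[i Hi]|/existsPn H0].
  by exists i.
have H : forall x : 'I_(2 * m), ~~ RP P x (rho_ord x).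
  move=> x; apply/negP => Hx; case: (ltnP x m) => xm.
    by move/negP: (H0 (Ordinal xm)); apply; rewrite /= -(rho_lo xm).
  have xm' : x - m < m by have := ltn_ord x; lia.
  move/negP: (H0 (Ordinal xm')); apply => /=.
  have -> : x - m + m = x by lia.
  apply: s; have -> : x - m = rho_nat m x by rewrite /rho_nat ltnNge xm.
  exact: Hx.
pose mn (x : 'I_(2 * m)) := [arg min_(y < x | RP P x y) val y].
have mnP : forall x : 'I_(2 * m), RP P x (mn x) /\ forall y : 'I_(2 * m), RP P x y -> mn x <= y.
  move=> x; rewrite /mn; case: arg_minnP; first exact: r.
  by move=> i Hi Hmin; split => // y /Hmin.
pose U := [set x : 'I_(2 * m) | mn x < mn (rho_ord x)].
have HU : forall x, (x \in U) = ~~ (rho_ord x \in U).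
  move=> x; rewrite !inE rho_ordK.
  have [h1 h2] := mnP x; have [h3 h4] := mnP (rho_ord x).
  have ne : (mn x : nat) != mn (rho_ord x).
    apply/negP => /eqP eq; move: (H x) => /negP; apply.
    apply: t _ _ _ h1 _; rewrite eq; exact: s _ _ h3.
  by rewrite -leqNgt ltn_neqAle ne.
have Ucl : forall x y : 'I_(2 * m), x \in U -> y \in pblock P x -> y \in U.
  move=> x y; rewrite -RP_ord !inE => xU Rxy.
  have e1 : mn y = mn x.
    apply: val_inj; apply/eqP; rewrite eqn_leq; apply/andP; split.
      by apply: (mnP y).2; apply: t _ _ _ (s _ _ Rxy) (mnP x).1.
    by apply: (mnP x).2; apply: t _ _ _ Rxy (mnP y).1.
  have Rr : RP P (rho_ord x) (rho_ord y) := ri _ _ Rxy.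
  have e2 : mn (rho_ord y) = mn (rho_ord x).
    apply: val_inj; apply/eqP; rewrite eqn_leq; apply/andP; split.
      by apply: (mnP _).2; apply: t _ _ _ (s _ _ Rr) (mnP _).1.
    by apply: (mnP _).2; apply: t _ _ _ Rr (mnP _).1.
  by rewrite e1 e2.
have dU : 2 * k %| #|U| by apply: union_dvd pP dv Ucl.
clearbody U.
have cU : #|U| = m.
  have := cardsC U; rewrite card_ord.
  have -> : ~: U = (@rho_ord m) @^-1: U.
    by apply/setP => x; rewrite !inE HU negbK.
  rewrite card_preimset; first lia.
  exact: (can_inj (@rho_ordK m)).
exfalso; move: dU; rewrite cU {1}em; apply/negP; exact: notdiv.
Qed.

Definition fP (m : nat) (P : {set {set 'I_(2 * m)}}) : {set {set 'I_m}} :=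
  mkP m (Trel m (RP P)).
Arguments fP : clear implicits.

Lemma Lfo_lt m z (j : 'I_m) : Lf m z j < 2 * m.
Proof. apply: Lf_lt; have := ltn_ord j; lia. Qed.

Lemma fP_block k m (P : {set {set 'I_(2 * m)}}) z (i : 'I_m) :
  Ptil k m P -> z < m -> RP P z (z + m) -> ~~ Trel m (RP P) i z ->
  2 * k %| #|pblock (fP m P) i|.
Proof.
move=> [pP ncP dv rinv] zm Hz nT.
have e := RP_EqR pP; have [r s t d] := e.
have nc := nc_to pP ncP; have ri := rinv_to pP rinv.
have eT := T_EqR e ri.
rewrite /fP pblock_mkP //.
pose phi (j : 'I_m) : 'I_(2 * m) := Ordinal (Lfo_lt z j).
have im := ltn_ord i.
have phi_inj : injective phi.
  move=> a b /(congr1 val) /=; have ha := ltn_ord a; have hb := ltn_ord b.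
  rewrite !Lf_lo // => h; apply: val_inj => /=; move: h; case: ifP => ?; case: ifP => ?; lia.
have Liw : win m z (Lf m z i) by rewrite Lf_lo // /win; case: ifP => ?; lia.
have nR : ~~ RP P (Lf m z i) z.
  by apply: contra nT => H; rewrite (T_L e nc ri zm Hz) // (Lf_lo _ zm) leqnn.
have -> : [set j : 'I_m | Trel m (RP P) i j] = phi @^-1: pblock P (phi i).
  apply/setP => j; rewrite !inE -RP_ord /= (T_L e nc ri zm Hz) //.
have HB : phi @: (phi @^-1: pblock P (phi i)) = pblock P (phi i).
  apply/setP => y; apply/idP/idP => [/imsetP[j]|Hy].
    by rewrite inE => Hj ->.
  have Ry0 : RP P (phi i) y by rewrite RP_ord.
  have Ry : RP P (Lf m z i) y := Ry0.
  have wy : win m z y by rewrite -(side e nc zm Hz Ry nR).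
  have yN := ltn_ord y.
  have pmy := pm_lt yN.
  have ey : phi (Ordinal pmy) = y.
    apply: val_inj => /=; rewrite Lf_lo //; move: wy; rewrite /win /pm.
    crush0.
  apply/imsetP; exists (Ordinal pmy) => //.
  by rewrite inE ey.
rewrite -(card_imset _ phi_inj) HB; apply: dv; apply: pblockP pP.
Qed.

Lemma RP_fP k m (P : {set {set 'I_(2 * m)}}) : Ptil k m P ->
  forall a b, RP (fP m P) a b = Trel m (RP P) a b.
Proof.
move=> [pP _ _ rinv]; apply: RP_mkP; apply: T_EqR; first exact: RP_EqR.
exact: rinv_to.
Qed.

Lemma f_Pr k m n (P : {set {set 'I_(2 * m)}}) : 0 < k -> m = 2 * k * n + k -> Ptil k m P ->
  Pr k m (fP m P).
Proof.
move=> k0 em HP; have [z [zm Hz]] := zero_exists k0 em HP.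
have [pP ncP dv rinv] := HP.
have e := RP_EqR pP; have nc := nc_to pP ncP; have ri := rinv_to pP rinv.
have eT := T_EqR e ri.
have pf : partition (fP m P) setT by apply: mkP_part.
split => //.
  apply: nc_from => //; apply: (NCn_ext _ (T_NC e nc ri zm Hz)).
  by move=> a b _ _; rewrite (RP_fP HP).
exists (pblock (fP m P) (Ordinal zm)); split; first exact: pblockP.
move=> B BQ ne; have [i [eB iB]] := blockP pf BQ; rewrite eB in ne *.
apply: (fP_block HP zm Hz); apply: contra ne => H.
have H' : RP (fP m P) (Ordinal zm) i by by rewrite (RP_fP HP); have [_ sT _ _] := eT; apply: sT.
rewrite RP_ord in H'.
by rewrite (same_pblock (partition_trivIset pf) H').
Qed.

Definition c0 k m (Q : {set {set 'I_m}}) : nat :=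
  if [pick i : 'I_m | ~~ (2 * k %| #|pblock Q i|)] is Some i then val i else 0.
Arguments c0 : clear implicits.

Lemma c0_spec k m n (Q : {set {set 'I_m}}) : 0 < k -> m = 2 * k * n + k -> Pr k m Q ->
  exists ci : 'I_m, [/\ val ci = c0 k m Q, ~~ (2 * k %| #|pblock Q ci|),
    (forall B, B \in Q -> ci \notin B -> 2 * k %| #|B|) & k %| #|pblock Q ci|].
Proof.
move=> k0 em [pQ ncQ [B0 [B0Q HB]]].
have cm : m = \sum_(B in Q) #|B| by rewrite -(card_partition pQ) cardsT card_ord.
have B0nd : ~~ (2 * k %| #|B0|).
  apply/negP => h; have : 2 * k %| m.
    rewrite cm; apply: dvdn_sum => B BQ; case: (eqVneq B B0) => [->//|]; exact: HB.
  by rewrite {1}em; apply/negP; exact: notdiv.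
have [i0 [eB0 _]] := blockP pQ B0Q.
rewrite /c0; case: pickP => [ci Hci | none]; last by move: (none i0); rewrite -eB0 (negbTE B0nd).
have eci : pblock Q ci = B0.
  apply/eqP; apply/negPn/negP => ne; move: Hci; rewrite (HB _ (pblockP ci pQ) ne).
  by [].
exists ci; split => //.
- move=> B BQ ciB; apply: HB => //; apply: contraNneq ciB => ->.
  by rewrite -eci mem_pblock (cover_partition pQ).
- rewrite eci.
  have : k %| m by rewrite em; apply: dvdn_add (dvdnn k); apply: dvdn_mulr; apply: dvdn_mull; exact: dvdnn.
  rewrite {1}cm (bigD1 B0) //= dvdn_addl //.
  apply: dvdn_sum => B /andP[BQ ne]; apply: dvdn_trans (HB _ BQ ne).
  exact: dvdn_mull.
Qed.

Lemma fP_zero k m n (P : {set {set 'I_(2 * m)}}) : 0 < k -> m = 2 * k * n + k -> Ptil k m P ->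
  c0 k m (fP m P) < m /\ RP P (c0 k m (fP m P)) (c0 k m (fP m P) + m).
Proof.
move=> k0 em HP; have [z [zm Hz]] := zero_exists k0 em HP.
have [ci [<- nd _ _]] := c0_spec k0 em (f_Pr k0 em HP).
have [pP ncP dv rinv] := HP.
have e := RP_EqR pP; have nc := nc_to pP ncP; have ri := rinv_to pP rinv.
have [r s t d] := e.
have cm := ltn_ord ci; split => //.
have T : Trel m (RP P) ci z.
  by apply/negPn; apply: contra nd => H; apply: (fP_block HP zm Hz).
have Rz : RP P ci z.
  case/and3P: T => _ _ /orP[//|H]; exact: t _ _ _ H (s _ _ Hz).
have := zero_rho e ri zm Hz Rz; rewrite rho_lo // => H.
exact: t _ _ _ Rz (s _ _ H).
Qed.

Definition gQ k m (Q : {set {set 'I_m}}) : {set {set 'I_(2 * m)}} :=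
  mkP (2 * m) (gR m (RP Q) (c0 k m Q)).
Arguments gQ : clear implicits.

Lemma win_hi m c u : c < m -> u < m -> win m c (u + m) = ~~ win m c u.
Proof. move=> cm um; rewrite -(rho_lo um) rho_win //; lia. Qed.

Lemma lo_lt m (u : 'I_m) : (u : nat) < 2 * m.
Proof. have := ltn_ord u; lia. Qed.
Lemma hi_lt m (u : 'I_m) : (u : nat) + m < 2 * m.
Proof. have := ltn_ord u; lia. Qed.
Definition lo m (u : 'I_m) : 'I_(2 * m) := Ordinal (lo_lt u).
Definition hi m (u : 'I_m) : 'I_(2 * m) := Ordinal (hi_lt u).

Lemma lo_inj m : injective (@lo m).
Proof. by move=> a b /(congr1 (@nat_of_ord _)) /= /val_inj. Qed.
Lemma hi_inj m : injective (@hi m).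
Proof. move=> a b /(congr1 (@nat_of_ord _)) /= /eqP; rewrite eqn_add2r => /eqP; exact: val_inj. Qed.

Lemma gR_blocks_dvd k m (S : nat -> nat -> bool) c (Q : {set {set 'I_m}}) (ci : 'I_m) (x : 'I_(2 * m)) :
  partition Q setT -> S = RP Q -> (ci : nat) = c ->
  (forall B, B \in Q -> ci \notin B -> 2 * k %| #|B|) -> k %| #|pblock Q ci| ->
  2 * k %| #|[set y : 'I_(2 * m) | gR m S c x y]|.
Proof.
move=> pQ eS ec HB Hk.
have e := RP_EqR pQ; rewrite -eS in e; have [r s t d] := e.
have cm : c < m by rewrite -ec; exact: ltn_ord.
have xN := ltn_ord x.
have pxm := pm_lt xN.
case Hxc: (S (pm m x) c).
  have -> : [set y : 'I_(2 * m) | gR m S c x y] = (@lo m) @: pblock Q ci :|: (@hi m) @: pblock Q ci.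
    apply/setP => y; rewrite !inE /gR xN ltn_ord /=.
    have yN := ltn_ord y; have pym := pm_lt yN.
    have E : (S (pm m x) (pm m y) && (S (pm m x) c || (win m c x == win m c y))) = S (pm m y) c.
      rewrite Hxc orTb andbT; apply/idP/idP => H.
        exact: t _ _ _ (s _ _ H) Hxc.
      exact: t _ _ _ Hxc (s _ _ H).
    rewrite E; apply/idP/orP => [H|[/imsetP[u]|/imsetP[u]]].
    - case: (ltnP y m) => ym.
        left; apply/imsetP; exists (Ordinal ym); last by apply: ord_inj.
        by rewrite -RP_ord /= -eS ec; apply: s; move: H; rewrite /pm ym.
      right; have ym' : y - m < m by lia.
      apply/imsetP; exists (Ordinal ym'); last by apply: ord_inj => /=; lia.
      rewrite -RP_ord /= -eS ec; apply: s; move: H; rewrite /pm ltnNge ym.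
      by [].
    - rewrite -RP_ord -eS ec => H ->; rewrite /pm /= ltn_ord; exact: s.
    - rewrite -RP_ord -eS ec => H ->; rewrite /pm /= ltnNge leq_addl /= addnK; exact: s.
  rewrite cardsU.
  have -> : (@lo m) @: pblock Q ci :&: (@hi m) @: pblock Q ci = set0.
    apply/setP => y; rewrite !inE; apply/negP => /andP[/imsetP[u _ ->] /imsetP[v _]].
    move/(congr1 (@nat_of_ord _)) => /=; have := ltn_ord u; lia.
  rewrite cards0 subn0 !card_imset; [| exact: hi_inj | exact: lo_inj].
  by rewrite addnn -mul2n dvdn_pmul2l.
pose phi (u : 'I_m) : 'I_(2 * m) := if win m c u == win m c x then lo u else hi u.
have phi_inj : injective phi.
  move=> a b; rewrite /phi; case: ifP => _; case: ifP => _ /(congr1 (@nat_of_ord _)) /= h;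
  apply: ord_inj; have := ltn_ord a; have := ltn_ord b; lia.
have pmx : (pm m x < m) by [].
have -> : [set y : 'I_(2 * m) | gR m S c x y] = phi @: pblock Q (Ordinal pmx).
  apply/setP => y; rewrite !inE /gR xN ltn_ord /= Hxc orFb.
  have yN := ltn_ord y; have pym := pm_lt yN.
  apply/idP/imsetP => [/andP[H1 /eqP H2]|[u]].
    exists (Ordinal pym); first by rewrite -RP_ord /= -eS.
    apply: ord_inj; rewrite /phi /=; case: ifP => /eqP h.
      move: h H2; rewrite /pm /=; case: (ltnP y m) => ym //.
      have wy : win m c y = ~~ win m c (y - m).
        rewrite -win_hi ?subnK //; lia.
      by rewrite wy => ->; case: (win m c x).
    move: h H2; rewrite /pm /=; case: (ltnP y m) => ym //=; last lia.
    by move=> h /esym.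
  rewrite -RP_ord /= -eS => H ->; rewrite /phi; case: ifP => /eqP h.
    by rewrite /= /pm ltn_ord H h eqxx.
  have E : pm m (hi u) = u by rewrite /hi /pm /=; have := ltn_ord u; case: ifP => ?; lia.
  rewrite E H /= /hi /= win_hi ?ltn_ord //.
  by move: h; case: (win m c u); case: (win m c x).
rewrite card_imset //; apply: HB; first exact: pblockP.
apply/negP; rewrite -RP_ord /= -eS ec => H; move/negP: Hxc; apply.
exact: H.
Qed.

Lemma Rrho m R x w : EqR (2 * m) R -> (forall a b, R a b -> R (rho_nat m a) (rho_nat m b)) ->
  x < 2 * m -> w < 2 * m -> R (rho_nat m x) w = R x (rho_nat m w).
Proof.
move=> e ri xN wN; apply/idP/idP => H.
  by have := ri _ _ H; rewrite rhoK.
by have := ri _ _ H; rewrite rhoK.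
Qed.

Lemma pm_cases m x : x < 2 * m -> pm m x = x \/ pm m x = rho_nat m x.
Proof. by rewrite /pm /rho_nat => h; case: ifP; [left|right]. Qed.

Lemma Tpm m R x y : EqR (2 * m) R -> (forall a b, R a b -> R (rho_nat m a) (rho_nat m b)) ->
  x < 2 * m -> y < 2 * m ->
  Trel m R (pm m x) (pm m y) = R x y || R x (rho_nat m y).
Proof.
move=> e ri xN yN; rewrite /Trel !pm_lt //=.
have pyN : pm m y < m := pm_lt yN.
rewrite -(rho_lo pyN).
have ryN : rho_nat m y < 2 * m := rho_lt yN.
have -> : R (pm m x) (pm m y) || R (pm m x) (rho_nat m (pm m y)) =
          R (pm m x) y || R (pm m x) (rho_nat m y).
  case: (pm_cases yN) => -> //; by rewrite rhoK // orbC.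
case: (pm_cases xN) => -> //.
by rewrite !Rrho // rhoK // orbC.
Qed.

Lemma gR_T m R c : EqR (2 * m) R -> NCn (2 * m) R ->
  (forall a b, R a b -> R (rho_nat m a) (rho_nat m b)) ->
  c < m -> R c (c + m) -> forall a b, gR m (Trel m R) c a b = R a b.
Proof.
move=> e nc ri cm Hc a b; have [r s t d] := e.
have Tc : forall x, x < 2 * m -> Trel m R (pm m x) c = R x c.
  move=> x xN; rewrite -{1}(_ : pm m c = c); last by rewrite /pm cm.
  rewrite Tpm //; last by lia.
  rewrite (rho_lo cm); apply/orP/idP => [[//|H]|->//]; last by left.
  exact: t _ _ _ H (s _ _ Hc).
apply/idP/idP => [/and4P[aN bN H1 H2]|H].
  rewrite Tpm // in H1; rewrite Tc // in H2.
  case/orP: H1 => // H1.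
  case/orP: H2 => [H2|/eqP W].
    have := zero_rho e ri cm Hc (t _ _ _ (s _ _ H1) H2).
    by rewrite rhoK // => H3; apply: t _ _ _ H2 (s _ _ H3).
  case Hac: (R a c); first by have := zero_rho e ri cm Hc (t _ _ _ (s _ _ H1) Hac);
    rewrite rhoK // => H3; apply: t _ _ _ Hac (s _ _ H3).
  have := side e nc cm Hc H1 (negbT Hac); rewrite rho_win // W.
  by case: (win m c b).
have /andP[aN bN] := d _ _ H.
rewrite /gR aN bN Tpm // H /= Tc //.
case Hac: (R a c) => //=.
by rewrite (side e nc cm Hc H (negbT Hac)).
Qed.

Lemma betw_aux m S u v c1 c2 : EqR m S -> NCn m S -> S u v -> S c1 c2 ->
  ~~ S u c1 -> ~~ S u c2 -> u < v -> u < c1 -> c1 < v -> c2 < m -> c2 != u -> c2 != v ->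
  u < c2 /\ c2 < v.
Proof.
move=> [r s t d] nc Huv H12 n1 n2 uv uc1 c1v c2m c2u c2v.
have /andP[um vm] := d _ _ Huv.
case: (ltnP c2 u) => h1.
  have := nc c2 u c1 v h1 uc1 c1v vm (s _ _ H12) Huv.
  by move/s => H; move: n2; rewrite H.
case: (ltnP v c2) => h2.
  have := nc u c1 v c2 uc1 c1v h2 c2m Huv H12.
  by move=> H; move: n1; rewrite H.
by move: c2u c2v; split; lia.
Qed.

Lemma betw m S u v c1 c2 : EqR m S -> NCn m S -> S u v -> S c1 c2 -> ~~ S u c2 ->
  ((c1 <= u) == (c1 <= v)) = ((c2 <= u) == (c2 <= v)).
Proof.
move=> e nc Huv H12 n2; have [r s t d] := e.
have n1 : ~~ S u c1 by apply: contra n2 => H; exact: t _ _ _ H H12.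
have /andP[c1m c2m] := d _ _ H12.
have ne : forall w c, S u w -> ~~ S u c -> c != w.
  by move=> w c H n; apply: contraNneq n => ->.
have nv1 : ~~ S v c1 by apply: contra n1; apply: t _ _ _ Huv.
have nv2 : ~~ S v c2 by apply: contra n2; apply: t _ _ _ Huv.
have u1 := ne _ _ (r _ (proj1 (andP (d _ _ Huv)))) n1.
have u2 := ne _ _ (r _ (proj1 (andP (d _ _ Huv)))) n2.
have v1 := ne _ _ Huv n1.
have v2 := ne _ _ Huv n2.
case: (ltngtP u v) => [uv|vu|<-]; last by rewrite !eqxx.
- have key : forall a b, S a b -> ~~ S u a -> ~~ S u b -> a != u -> a != v -> b != u -> b != v -> a < m -> b < m ->
    (u < a < v) -> (u < b < v).
    move=> a b Hab na nb au av bu bv am bm /andP[h1 h2].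
    have := betw_aux e nc Huv Hab na nb uv h1 h2 bm bu bv.
    by case=> -> ->.
  have E : forall a, a != u -> a != v -> ((a <= u) == (a <= v)) = ~~ (u < a < v).
    move=> a; rewrite !neq_ltn.
    case E1: (u < a); case E2: (a < v); case E3: (a <= u); case E4: (a <= v) => //= *; exfalso; lia.
  rewrite E // E //; congr negb; apply/idP/idP.
    exact: key.
  by apply: key => //; apply: s.
- have key : forall a b, S a b -> ~~ S u a -> ~~ S u b -> a != u -> a != v -> b != u -> b != v -> a < m -> b < m ->
    (v < a < u) -> (v < b < u).
    move=> a b Hab na nb au av bu bv am bm /andP[h1 h2].
    have na' : ~~ S v a by apply: contra na; apply: t _ _ _ Huv.
    have nb' : ~~ S v b by apply: contra nb; apply: t _ _ _ Huv.
    have := betw_aux e nc (s _ _ Huv) Hab na' nb' vu h1 h2 bm bv bu.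
    by case=> -> ->.
  have E : forall a, a != u -> a != v -> ((a <= u) == (a <= v)) = ~~ (v < a < u).
    move=> a; rewrite !neq_ltn.
    case E1: (v < a); case E2: (a < u); case E3: (a <= u); case E4: (a <= v) => //= *; exfalso; lia.
  rewrite E // E //; congr negb; apply/idP/idP.
    exact: key.
  by apply: key => //; apply: s.
Qed.

Lemma win_pm m c x : c < m -> x < 2 * m -> win m c x = ((c <= pm m x) == (x < m)).
Proof.
move=> cm xN; rewrite /win /pm; case: (ltnP x m) => h /=.
  by rewrite eqb_id; apply/idP/idP => [/andP[]//|H]; apply/andP; split => //; lia.
rewrite eqbF_neg; apply/idP/idP => H; first by apply/negP => H'; move: H H'; lia.
by apply/andP; split; move: H; lia.
Qed.

Lemma gR_mono m S S' c c' a b : EqR m S -> EqR m S' -> NCn m S' ->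
  (forall u v, S u v -> S' u v) -> S' c c' -> c < m -> c' < m ->
  gR m S c a b -> gR m S' c' a b.
Proof.
move=> e e' nc' inc Hcc' cm c'm /and4P[aN bN H1 H2].
have [r' s' t' d'] := e'.
rewrite /gR aN bN (inc _ _ H1) /=.
case/orP: H2 => [H2|/eqP W].
  by rewrite (t' _ _ _ (inc _ _ H2) Hcc').
case H3: (S' (pm m a) c') => //=.
have BE := betw e' nc' (inc _ _ H1) Hcc' (negbT H3).
move: W; rewrite !win_pm //.
move: BE; case: (c <= pm m a); case: (c <= pm m b); case: (c' <= pm m a); case: (c' <= pm m b);
  case: (a < m); case: (b < m) => //=.
Qed.

Lemma RP_gQ k m n (Q : {set {set 'I_m}}) : 0 < k -> m = 2 * k * n + k -> Pr k m Q ->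
  forall a b, RP (gQ k m Q) a b = gR m (RP Q) (c0 k m Q) a b.
Proof.
move=> k0 em HQ; have [ci [ec _ _ _]] := c0_spec k0 em HQ.
have [pQ _ _] := HQ.
apply: RP_mkP; apply: gR_EqR; first exact: RP_EqR.
by rewrite -ec; exact: ltn_ord.
Qed.

Lemma g_Ptil k m n (Q : {set {set 'I_m}}) : 0 < k -> m = 2 * k * n + k -> Pr k m Q ->
  Ptil k m (gQ k m Q).
Proof.
move=> k0 em HQ; have [ci [ec nd HB Hk]] := c0_spec k0 em HQ.
have [pQ ncQ _] := HQ.
have eS := RP_EqR pQ.
have cm : c0 k m Q < m by rewrite -ec; exact: ltn_ord.
have eG := gR_EqR eS cm.
have pg : partition (gQ k m Q) setT := mkP_part eG.
split => //.
- apply: nc_from => //; apply: (NCn_ext _ (gR_NC eS (nc_to pQ ncQ) cm)).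
  by move=> a b _ _; rewrite (RP_mkP eG).
- move=> B BG; have [x [-> _]] := blockP pg BG.
  rewrite /gQ pblock_mkP //.
  exact: (gR_blocks_dvd x pQ erefl ec HB Hk).
- apply: rinv_from => // a b; rewrite !(RP_mkP eG); exact: gR_rho.
Qed.

Lemma gf k m n (P : {set {set 'I_(2 * m)}}) : 0 < k -> m = 2 * k * n + k -> Ptil k m P ->
  gQ k m (fP m P) = P.
Proof.
move=> k0 em HP; have HQ := f_Pr k0 em HP.
have [cm Hc] := fP_zero k0 em HP.
have [pP ncP dv rinv] := HP.
have e := RP_EqR pP; have nc := nc_to pP ncP; have ri := rinv_to pP rinv.
have [pQ _ _] := HQ.
apply: part_eq => //; first by have [] := g_Ptil k0 em HQ.
move=> a b; rewrite (RP_gQ k0 em HQ) /gR !(RP_fP HP).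
by have := gR_T e nc ri cm Hc a b; rewrite /gR.
Qed.

Lemma fg k m n (Q : {set {set 'I_m}}) : 0 < k -> m = 2 * k * n + k -> Pr k m Q ->
  fP m (gQ k m Q) = Q.
Proof.
move=> k0 em HQ; have HP := g_Ptil k0 em HQ.
have [ci [ec _ _ _]] := c0_spec k0 em HQ.
have cm : c0 k m Q < m by rewrite -ec; exact: ltn_ord.
have [pQ _ _] := HQ.
have [r s t d] := RP_EqR pQ.
apply: part_eq => //; first by have [] := f_Pr k0 em HP.
move=> a b; rewrite (RP_fP HP) /Trel !(RP_gQ k0 em HQ).
apply/idP/idP => [/and3P[am bm /orP[]]|H].
- by case/and4P => _ _; rewrite /pm am bm.
- case/and4P => _ _; rewrite /pm am /=.
  have -> : (b + m < m) = false by lia.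
  by rewrite addnK.
- have /andP[am bm] := d _ _ H; rewrite am bm /=.
  have aN : a < 2 * m by lia. have bN : b < 2 * m by lia. have bmN : b + m < 2 * m by lia.
  rewrite /gR aN bN bmN /pm am bm /=.
  have -> : (b + m < m) = false by lia.
  rewrite addnK H /= win_hi //.
  by case: (RP Q a (c0 k m Q)); case: (win m (c0 k m Q) a); case: (win m (c0 k m Q) b).
Qed.

Lemma exc_mono k m n (Q Q' : {set {set 'I_m}}) : 0 < k -> m = 2 * k * n + k -> Pr k m Q -> Pr k m Q' ->
  (forall a b, RP Q a b -> RP Q' a b) -> RP Q' (c0 k m Q) (c0 k m Q').
Proof.
move=> k0 em HQ HQ' inc.
have [ci [ec nd HB Hk]] := c0_spec k0 em HQ.
have [ci' [ec' nd' HB' Hk']] := c0_spec k0 em HQ'.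
have [pQ _ _] := HQ; have [pQ' _ _] := HQ'.
rewrite -ec -ec' RP_ord.
case: (boolP (2 * k %| #|pblock Q' ci|)) => D; last first.
  by apply/negPn; apply: contra D => H; apply: HB' => //; apply: pblockP.
exfalso; move/negP: nd; apply.
have tQ' := partition_trivIset pQ'.
have sub : forall x y : 'I_m, x \in pblock Q ci -> y \in pblock Q x -> y \in pblock Q' ci.
  move=> x y; rewrite -!RP_ord => H1 H2; apply: inc.
  have [_ _ t _] := RP_EqR pQ; exact: t _ _ _ H1 H2.
have cl : forall x y : 'I_m, x \in pblock Q' ci -> y \in pblock Q x -> y \in pblock Q' ci.
  move=> x y H1 H2; rewrite -(same_pblock tQ' H1).
  by rewrite -RP_ord; apply: inc; rewrite RP_ord.
move: D; rewrite (block_union pQ cl).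
rewrite (eq_bigl (fun B => (B \in Q) && (B \subset pblock Q' ci))); last by move=> B; rewrite inE.
have Bin : (pblock Q ci \in Q) && (pblock Q ci \subset pblock Q' ci).
  rewrite pblockP //=; apply/subsetP => y; apply: sub.
  by rewrite mem_pblock (cover_partition pQ).
rewrite (bigD1 (pblock Q ci) Bin) /= dvdn_addl //.
apply: dvdn_sum => B /andP[/andP[BQ _] ne].
apply: HB => //; apply: contra ne => ciB.
by rewrite (def_pblock (partition_trivIset pQ) BQ ciB).
Qed.

Lemma g_mono k m n (Q Q' : {set {set 'I_m}}) : 0 < k -> m = 2 * k * n + k -> Pr k m Q -> Pr k m Q' ->
  (forall a b, RP Q a b -> RP Q' a b) -> forall a b, RP (gQ k m Q) a b -> RP (gQ k m Q') a b.
Proof.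
move=> k0 em HQ HQ' inc a b.
have [ci [ec _ _ _]] := c0_spec k0 em HQ.
have [ci' [ec' _ _ _]] := c0_spec k0 em HQ'.
have [pQ ncQ _] := HQ; have [pQ' ncQ' _] := HQ'.
rewrite !(RP_gQ k0 em) //.
apply: gR_mono; try exact: RP_EqR.
- exact: nc_to.
- exact: inc.
- exact: exc_mono k0 em HQ HQ' inc.
- by rewrite -ec; exact: ltn_ord.
- by rewrite -ec'; exact: ltn_ord.
Qed.

Lemma core k m n : 0 < k -> m = 2 * k * n + k -> poset_iso (Ptil k m) (Pr k m).
Proof.
move=> k0 em; exists (fP m); split.
- by move=> P HP; apply: f_Pr k0 em HP.
- move=> P Q HP HQ E; by rewrite -(gf k0 em HP) -(gf k0 em HQ) E.
- by move=> Q HQ; exists (gQ k m Q); split; [apply: g_Ptil k0 em HQ | apply: fg k0 em HQ].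
- move=> P Q HP HQ.
  have HfP := f_Pr k0 em HP; have HfQ := f_Pr k0 em HQ.
  have [pP _ _ _] := HP; have [pQ _ _ _] := HQ.
  have [pfP _ _] := HfP; have [pfQ _ _] := HfQ.
  split => ref.
  + apply: (ref_from pfP pfQ) => a b; rewrite (RP_fP HP) (RP_fP HQ).
    case/and3P => am bm H; rewrite /Trel am bm /=.
    by case/orP: H => H; apply/orP; [left|right]; apply: (ref_to pP pQ ref).
  + apply: (ref_from pP pQ) => a b.
    move=> H; rewrite -(gf k0 em HQ); move: H; rewrite -(gf k0 em HP).
    apply: (g_mono k0 em HfP HfQ).
    exact: ref_to pfP pfQ ref.
Qed.

Theorem theorem6p1 (n k : nat) : (0 < n)%N -> (0 < k)%N ->
  poset_iso (@NCtilde k n) (@NCr (2 * k) n k).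
Proof.
move=> _ k0.
change (poset_iso (Ptil k (k * (2 * n + 1))) (Pr k (2 * k * n + k))).
have -> : k * (2 * n + 1) = 2 * k * n + k by rewrite mulnDr muln1 mulnA (mulnC k 2).
exact: core k0 erefl.
Qed.
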